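(* Let $G$ act properly on the Borel space $S$ such that the stabilizer $G_{s,s}=\{g\in G:gs=s\}$ is locally closed in $G$ (the intersection of an open and a closed set) for every $s\in S$. Then $G_{s,s}$ is compact for every $s\in S$.
   Context: $G$ is a locally compact second countable Hausdorff group with left Haar measure $\lambda$. $S$ is a Borel space, $G$ acts measurably on $S$, and the action is proper: with $\mu_s$ the image of $\lambda$ under $g\mapsto gs$, there is a measurable partition $B_1,B_2,\dots$ of $S$ such that $\mu_s(B_n)<\infty$ for all $s\in S$, $n\in\mathbb N$. *)

(* Defs.v *)
From HB Require Import structures.
From mathcomp Require Import all_boot all_order all_algebra.
From mathcomp Require Import all_classical all_reals all_analysis.
Set Implicit Arguments. Unset Strict Implicit. Unset Printing Implicit Defensive.
Import Order.TTheory GRing.Theory Num.Theory.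
Local Open Scope classical_set_scope.
Local Open Scope ereal_scope.

Definition is_group (G : Type) (mul : G -> G -> G) (inv : G -> G) (e : G) :=
  [/\ (forall x y z, mul x (mul y z) = mul (mul x y) z),
      (forall x, mul e x = x /\ mul x e = x) &
      (forall x, mul (inv x) x = e /\ mul x (inv x) = e)].

Definition topological_group (G : topologicalType) (mul : G -> G -> G)
    (inv : G -> G) (e : G) :=
  [/\ is_group mul inv e,
      continuous (fun p : G * G => mul p.1 p.2) &
      continuous inv].

Definition Borel (G : ptopologicalType) := g_sigma_algebraType (@open G).

(* A left Haar measure on the Borel sets of G: a nonzero left-invariant
   Borel measure, finite on compacts and positive on nonempty open sets
   (for lcsc Hausdorff groups such a measure is automatically regular). *)
Definition left_Haar_measure (R : realType) (G : ptopologicalType)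
    (mul : G -> G -> G) (lam : set (Borel G) -> \bar R) :=
  [/\ (forall (g : G) (A : set (Borel G)), measurable A ->
         lam [set mul g x | x in A] = lam A),
      (forall K : set G, compact K -> lam K < +oo) &
      (forall U : set G, open U -> U !=set0 -> 0 < lam U)].

(* Borel space in Kallenberg's sense: Borel isomorphic to a Borel subset
   of [0,1]. *)
Definition borel_space (R : realType) (d : measure_display)
    (S : measurableType d) :=
  exists f : S -> R,
    [/\ injective f, measurable_fun setT f,
        measurable (range f), range f `<=` `[0%R, 1%R] &
        (forall A : set S, measurable A -> measurable (f @` A))].

Definition measurable_action (G : ptopologicalType) (mul : G -> G -> G)
    (e : G) (d : measure_display) (S : measurableType d) (act : G -> S -> S) :=
  [/\ (forall s, act e s = s),
      (forall g h s, act (mul g h) s = act g (act h s)) &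
      measurable_fun setT (fun p : (Borel G * S)%type => act p.1 p.2)].

Definition orbit_measure (R : realType) (G : ptopologicalType)
    (d : measure_display) (S : measurableType d)
    (lam : set (Borel G) -> \bar R) (act : G -> S -> S) (s : S) :
    set S -> \bar R :=
  fun B => lam ((fun g : G => act g s) @^-1` B).

Definition proper_action (R : realType) (G : ptopologicalType)
    (d : measure_display) (S : measurableType d)
    (lam : set (Borel G) -> \bar R) (act : G -> S -> S) :=
  exists B : nat -> set S,
    [/\ (forall n, measurable (B n)),
        trivIset setT B,
        \bigcup_n B n = setT &
        (forall s n, orbit_measure lam act s (B n) < +oo)].

Definition stabilizer (G : Type) (S : Type) (act : G -> S -> S) (s : S) :
  set G := [set g | act g s = s].

Definition locally_closed (T : topologicalType) (A : set T) :=
  exists U C : set T, [/\ open U, closed C & A = U `&` C].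

(* Main.v *)
Require Import Defs.
From HB Require Import structures.
From mathcomp Require Import all_boot all_order all_algebra.
From mathcomp Require Import all_classical all_reals all_analysis.
From mathcomp Require Import measurable_realfun.
Import Order.TTheory GRing.Theory Num.Theory.
Local Open Scope classical_set_scope.
Local Open Scope ereal_scope.
Set Implicit Arguments. Unset Strict Implicit.


Section Grp.
Context (G : Type) (mul : G -> G -> G) (inv : G -> G) (e : G)
  (Hg : is_group mul inv e).

Lemma gA x y z : mul x (mul y z) = mul (mul x y) z.
Proof. by case: Hg. Qed.
Lemma g1x x : mul e x = x. Proof. by case: Hg => _ H _; case: (H x). Qed.
Lemma gx1 x : mul x e = x. Proof. by case: Hg => _ H _; case: (H x). Qed.
Lemma gVx x : mul (inv x) x = e. Proof. by case: Hg => _ _ H; case: (H x). Qed.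
Lemma gxV x : mul x (inv x) = e. Proof. by case: Hg => _ _ H; case: (H x). Qed.
Lemma gKV x y : mul (inv x) (mul x y) = y.
Proof. by rewrite gA gVx g1x. Qed.
Lemma gVK x y : mul x (mul (inv x) y) = y.
Proof. by rewrite gA gxV g1x. Qed.
Lemma gK x y : mul (mul y x) (inv x) = y.
Proof. by rewrite -gA gxV gx1. Qed.
Lemma gKr x y : mul (mul y (inv x)) x = y.
Proof. by rewrite -gA gVx gx1. Qed.
Lemma g_invl a b : mul a b = e -> a = inv b.
Proof. by move=> h; rewrite -[a]gx1 -(gxV b) gA h g1x. Qed.
Lemma gVV x : inv (inv x) = x.
Proof. by apply/esym/g_invl; rewrite gxV. Qed.
Lemma gVM x y : inv (mul x y) = mul (inv y) (inv x).
Proof. by apply/esym/g_invl; rewrite -gA gKV gVx. Qed.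
Lemma gVe : inv e = e.
Proof. by apply/esym/g_invl; rewrite g1x. Qed.
End Grp.

Section Topo.
Context (G : ptopologicalType) (mul : G -> G -> G) (inv : G -> G) (e : G)
  (HG : topological_group mul inv e).

Lemma tg_group : is_group mul inv e. Proof. by case: HG. Qed.
Lemma cont_inv : continuous inv. Proof. by case: HG. Qed.

Lemma cont_mul2 (T : topologicalType) (f g : T -> G) :
  continuous f -> continuous g -> continuous (fun x => mul (f x) (g x)).
Proof.
move=> cf cg x; apply: continuous2_cvg => //.
- case: HG => _ cm _; exact: (cm (f x, g x)).
- exact: cf.
- exact: cg.
Qed.

Lemma cont_id : continuous (fun x : G => x).
Proof. by move=> x; exact: cvg_id. Qed.
Lemma cont_cst (a : G) : continuous (fun _ : G => a).
Proof. by move=> x; exact: cvg_cst. Qed.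
Lemma cont_comp (f g : G -> G) : continuous f -> continuous g ->
  continuous (fun x => f (g x)).
Proof. move=> cf cg x; exact: (continuous_comp (cg x) (cf (g x))). Qed.

Lemma open_pre (f : G -> G) (U : set G) : continuous f -> open U ->
  open [set x | U (f x)].
Proof. by move=> /continuousP cf /cf. Qed.

Lemma lc_subgroup_closed (H : set G) :
  H e -> (forall x y, H x -> H y -> H (mul x y)) -> (forall x, H x -> H (inv x)) ->
  locally_closed H -> closed H.
Proof.
move=> He HM HV [U [C [oU cC HUC]]].
have gg := tg_group.
rewrite closure_id; apply/seteqP; split; first exact: subset_closure.
move=> x clx.
pose O := [set y | U (mul (inv y) x)].
have oO : open O.
  apply: open_pre oU; apply: cont_mul2; [exact: cont_inv|exact: cont_cst].
have Ox : O x by rewrite /O /= (gVx gg); move: He; rewrite HUC => -[].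
have [h [Hh Oh]] : H `&` O !=set0.
  by apply: clx; apply: open_nbhs_nbhs; split.
have clz : closure H (mul (inv h) x).
  move=> B nB.
  pose B' := [set y | B (mul (inv h) y)].
  have nB' : nbhs x B'.
    have cf : continuous (fun y => mul (inv h) y).
      by apply: cont_mul2; [exact: cont_cst|exact: cont_id].
    exact: (cf x B nB).
  have [y [Hy B'y]] := clx B' nB'.
  by exists (mul (inv h) y); split => //; apply: HM => //; exact: HV.
have clC : closure H `<=` C.
  rewrite (closure_id C).1 //; apply: closureS; rewrite HUC; by move=> ? [].
have Hz : H (mul (inv h) x) by rewrite HUC; split => //; exact: clC.
by rewrite -(gVK gg h x); apply: HM.
Qed.

End Topo.

Section SigmaCompact.
Context (G : ptopologicalType).
Hypothesis Hlc : locally_compact [set: G].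
Hypothesis Hsc : @second_countable G.

Lemma sigma_compact_cover : exists K : nat -> set G,
  (forall m, compact (K m) /\ closed (K m)) /\ forall x, exists m, K m x.
Proof.
case: Hsc => B cB [Bop Bb].
have [f finj] := countable_injP _ cB.
pose Bm m := [set b | B b /\ f b = m /\ compact (closure b)].
pose K m := [set x | exists b, Bm m b /\ closure b x].
exists K; split.
  move=> m; have [[b0 Bb0]|nb] := pselect (exists b, Bm m b).
    have -> : K m = closure b0.
      apply/seteqP; split => [x [b [Bmb cbx]]|x cx]; last by exists b0.
      have eb : b = b0.
        apply: finj; rewrite ?inE; [by case: Bmb|by case: Bb0|].
        by case: Bmb => _ [-> _]; case: Bb0 => _ [-> _].
      by rewrite -eb.
    by split; [case: Bb0 => _ [_ h]; exact: h|exact: closed_closure].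
  have -> : K m = set0.
    by apply/seteqP; split => // x [b [Bmb _]]; apply: nb; exists b.
  by split; [exact: compact0|exact: closed0].
move=> x.
have [U Ux [cU clU]] := Hlc (x:=x) I.
rewrite withinET in Ux.
have [b [Bbb bx] bU] := Bb x U Ux.
exists (f b); exists b; split; last exact: subset_closure.
split => //; split => //.
apply: (subclosed_compact _ cU); first exact: closed_closure.
by rewrite (closure_id U).1 //; exact: closureS.
Qed.
End SigmaCompact.

Section Seq.
Context (G : ptopologicalType) (mul : G -> G -> G) (inv : G -> G) (e : G)
  (HG : topological_group mul inv e).

Lemma noncompact_seq (H K : set G) : closed H -> ~ compact H -> compact K ->
  exists h : nat -> G, (forall i, H (h i)) /\
    (forall i j w, (i < j)%N -> K (mul w (inv (h i))) -> K (mul w (inv (h j))) -> False).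
Proof.
move=> cH ncH cK.
have gg := tg_group HG.
pose KK a := [set mul (mul (inv p.1) p.2) a | p in K `*` K].
pose L (l : seq G) := \big[setU/set0]_(a <- l) KK a.
have cKK a : compact (KK a).
  apply: continuous_compact; last exact: compact_setX.
  apply: continuous_subspaceT.
  apply: (cont_mul2 HG).
    apply: (cont_mul2 HG).
      move=> p; apply: (continuous_comp (cvg_fst (FG:=nbhs_filter _))).
      exact: (cont_inv HG).
    move=> p; exact: cvg_snd.
  move=> p; exact: cvg_cst.
have cL l : compact (L l) by apply: bigsetU_compact => a _; exact: cKK.
have ex l : exists h, H h /\ ~ L l h.
  apply/not_existsP => /= hall; apply: ncH.
  apply: (subclosed_compact cH (cL l)) => x Hx.
  have := hall x; move=> /not_andP [//|]; by move=> /contrapT.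
pose g l := projT1 (cid (ex l)).
have gP l : H (g l) /\ ~ L l (g l) by rewrite /g; case: cid.
pose fix hs n := if n is n'.+1 then g (hs n') :: hs n' else [::].
exists (fun n => g (hs n)); split; first by move=> i; case: (gP (hs i)).
have sub i j : (i < j)%N -> KK (g (hs i)) `<=` L (hs j).
  elim: j => // j IH; rewrite ltnS leq_eqVlt => /orP [/eqP ->|/IH ij].
    by rewrite /L /= big_cons; left.
  by rewrite /L /= big_cons; right; exact: ij.
move=> i j w ij Ki Kj.
case: (gP (hs j)) => _; apply; apply: (sub i j ij).
exists (mul w (inv (g (hs j))), mul w (inv (g (hs i)))) => //=.
by rewrite (gVM gg) (gVV gg) -!(gA gg) (gKV gg) (gVx gg) (gx1 gg).
Qed.
End Seq.


Section BorelMeas.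
Context (G : ptopologicalType).
Local Notation BG := (Borel G).

Lemma open_meas (U : set G) : open U -> measurable (U : set BG).
Proof. by move=> oU; apply: sub_sigma_algebra. Qed.

Lemma closed_meas (U : set G) : closed U -> measurable (U : set BG).
Proof.
move=> cU; rewrite -[U]setCK; apply: measurableC; apply: open_meas.
by rewrite openC.
Qed.

Lemma cont_meas (f : G -> G) : continuous f -> measurable_fun setT (f : BG -> BG).
Proof.
move=> cf; eapply (@measurability _ _ BG BG setT _ open); first by [].
move=> _ [B oB <-]; apply: measurableI => //; apply: open_meas.
by move: (cf) => /continuousP; apply.
Qed.

Hypothesis Hsc : @second_countable G.

Lemma open_prod_meas (W : set (G * G)) : open W ->
  measurable (W : set (BG * BG)).
Proof.
move=> oW.
case: Hsc => B cB [Bop Bb].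
have [f finj] := countable_injP _ cB.
pose P n m b1 b2 := [/\ B b1, B b2, f b1 = n, f b2 = m & b1 `*` b2 `<=` W].
pose Rr n m := [set p : G * G | exists b1 b2, P n m b1 b2 /\ b1 p.1 /\ b2 p.2].
have -> : W = \bigcup_n \bigcup_m Rr n m.
  apply/seteqP; split => [p Wp|p [n _ [m _ [b1 [b2 [[? ? ? ? sW] [h1 h2]]]]]]]; last first.
    exact: sW.
  have : nbhs p W by move: oW; rewrite openE => /(_ p Wp).
  case=> -[Q1 Q2] /= [nQ1 nQ2] sQ.
  have [b1 [Bb1 b1p] b1Q] := Bb p.1 Q1 nQ1.
  have [b2 [Bb2 b2p] b2Q] := Bb p.2 Q2 nQ2.
  exists (f b1) => //; exists (f b2) => //; exists b1, b2; split => //.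
  split => // q [/b1Q ? /b2Q ?]; exact: sQ.
apply: bigcupT_measurable => n; apply: bigcupT_measurable => m.
have [[b1 [b2 Pb]]|nb] := pselect (exists b1 b2, P n m b1 b2).
  have -> : Rr n m = b1 `*` b2.
    apply/seteqP; split => [p [c1 [c2 [Pc [h1 h2]]]]|p [h1 h2]]; last first.
      by exists b1, b2.
    case: Pb => Bb1 Bb2 fb1 fb2 _; case: Pc => Bc1 Bc2 fc1 fc2 _.
    have e1 : c1 = b1 by apply: finj; rewrite ?inE // fb1 fc1.
    have e2 : c2 = b2 by apply: finj; rewrite ?inE // fb2 fc2.
    by rewrite -e1 -e2.
  case: Pb => Bb1 Bb2 _ _ _.
  by apply: measurableX; apply: open_meas; apply: Bop.
have -> : Rr n m = set0.
  by apply/seteqP; split => // p [b1 [b2 [Pb _]]]; apply: nb; exists b1, b2.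
exact: measurable0.
Qed.

Lemma cont2_meas (h : G * G -> G) : continuous h ->
  measurable_fun setT (h : BG * BG -> BG).
Proof.
move=> ch; eapply (@measurability _ _ (BG * BG)%type BG setT _ open); first by [].
move=> _ [U oU <-]; apply: measurableI => //; apply: open_prod_meas.
by move: (ch) => /continuousP; apply.
Qed.
End BorelMeas.


Section Haar.
Context (R : realType) (G : ptopologicalType) (mul : G -> G -> G) (inv : G -> G) (e : G).
Hypothesis HG : topological_group mul inv e.
Hypothesis Hsc : @second_countable G.
Context (lam : measure (Borel G) R).
Hypothesis Hlam : left_Haar_measure mul lam.
Hypothesis Hsf : sigma_finite setT lam.
Local Notation BG := (Borel G).

Definition lamS := (lam : set BG -> \bar R).
HB.instance Definition _ := Measure.on lamS.
HB.instance Definition _ := Measure_isSigmaFinite.Build _ _ _ lamS Hsf.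

Let gg := tg_group HG.

Lemma cont_fst : continuous (fun p : G * G => p.1).
Proof. by move=> p; exact: cvg_fst. Qed.
Lemma cont_snd : continuous (fun p : G * G => p.2).
Proof. by move=> p; exact: cvg_snd. Qed.

Lemma meas_pre2 (h : G * G -> G) (A : set G) : continuous h ->
  measurable (A : set BG) -> measurable ([set p | A (h p)] : set (BG * BG)).
Proof.
move=> ch mA; have := cont2_meas Hsc ch measurableT mA.
by rewrite setTI.
Qed.

Lemma meas_pre1 (h : G -> G) (A : set G) : continuous h ->
  measurable (A : set BG) -> measurable ([set p | A (h p)] : set BG).
Proof.
move=> ch mA; have := cont_meas ch measurableT mA.
by rewrite setTI.
Qed.

Lemma lam_pre_l x (A : set BG) : measurable A ->
  lam [set y | A (mul x y)] = lam A.
Proof.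
move=> mA; case: Hlam => Hi _ _.
rewrite -(Hi (inv x) A mA); congr (lam _); apply/seteqP; split.
  by move=> y Ay; exists (mul x y) => //; rewrite (gKV gg).
by move=> _ [z Az <-] /=; rewrite (gVK gg).
Qed.

Lemma key (E W : set BG) : measurable E -> measurable W ->
  \int[lamS]_(x in W) lamS [set y | E (mul y x)] =
  lamS E * lamS [set y | W (inv y)].
Proof.
move=> mE mW.
pose D := [set p : BG * BG | W p.1 /\ E (mul p.2 p.1)].
have mD : measurable D.
  apply: measurableI.
    by apply: meas_pre2 => //; exact: cont_fst.
  apply: meas_pre2 => //; apply: (cont_mul2 HG); [exact: cont_snd|exact: cont_fst].
have T1 := indic_fubini_tonelli lamS lamS mD.
rewrite indic_fubini_tonelli_FE // indic_fubini_tonelli_GE // in T1.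
pose D' := [set p : BG * BG | W (mul (inv p.1) p.2) /\ E p.2].
have mD' : measurable D'.
  apply: measurableI; last by apply: meas_pre2 => //; exact: cont_snd.
  apply: meas_pre2 => //; apply: (cont_mul2 HG); last exact: cont_snd.
  by move=> p; apply: (continuous_comp (cvg_fst (FG:=nbhs_filter _))); exact: (cont_inv HG).
have T2 := indic_fubini_tonelli lamS lamS mD'.
rewrite indic_fubini_tonelli_FE // indic_fubini_tonelli_GE // in T2.
have e1 : \int[lamS]_(x in W) lamS [set y | E (mul y x)] =
          \int[lamS]_x (lamS \o xsection D) x.
  rewrite integral_mkcond; apply: eq_integral => x _ /=.
  rewrite /patch; case: ifPn => Wx.
    congr (lamS _); apply/seteqP; split => y; rewrite /xsection /= inE /D /=.
      by move=> Ey; split => //; move: Wx; rewrite inE.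
    by case.
  transitivity (lamS set0); first by rewrite measure0.
  congr (lamS _); apply/seteqP; split => y //.
  rewrite /xsection /= inE /D /= => -[Wx' _]; move: Wx; rewrite notin_setE; exact.
have e2 : (lamS \o ysection D) = (lamS \o xsection D').
  apply/funext => y /=.
  have -> : ysection D y = [set x | [set z | W (mul (inv y) z) /\ E z] (mul y x)].
    apply/seteqP; split => x; rewrite /ysection /= inE /D /= (gKV gg) //.
  rewrite /lamS lam_pre_l; last first.
    apply: measurableI => //; apply: meas_pre1 => //.
    apply: (cont_mul2 HG); [exact: cont_cst|exact: cont_id].
  congr (lam _); apply/seteqP; split => z; rewrite /xsection /= inE /D' //.
have e3 : \int[lamS]_z (lamS \o ysection D') z =
          \int[lamS]_(z in E) (cst (lamS [set y | W (inv y)])) z.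
  rewrite [RHS]integral_mkcond; apply: eq_integral => z _ /=.
  rewrite /patch; case: ifPn => Ez.
    have -> : ysection D' z = [set y | [set u | W (inv u)] (mul (inv z) y)].
      apply/seteqP; split => y; rewrite /ysection /= inE /D' /= (gVM gg) (gVV gg).
        by case.
      by move=> Wy; split => //; move: Ez; rewrite inE.
    rewrite /lamS lam_pre_l //; apply: meas_pre1 => //; exact: (cont_inv HG).
  transitivity (lamS set0); last by rewrite measure0.
  congr (lamS _); apply/seteqP; split => y //.
  rewrite /ysection /= inE /D' /= => -[_ Ez']; move: Ez; rewrite notin_setE; exact.
rewrite e1 T1 e2 T2 e3 integral_cst // muleC //.
Qed.


Lemma lamT_gt0 : 0 < lam setT.
Proof. by case: Hlam => _ _ H; apply: H; [exact: openT|exists point]. Qed.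

Lemma phi_meas (E : set BG) : measurable E ->
  measurable_fun setT (fun x : BG => (lamS [set y | E (mul y x)] : \bar R)).
Proof.
move=> mE.
have mA : measurable ([set p | E (mul p.2 p.1)] : set (BG * BG)).
  apply: meas_pre2 => //; apply: (cont_mul2 HG); [exact: cont_snd|exact: cont_fst].
have -> : (fun x : BG => lamS [set y | E (mul y x)]) =
   lamS \o xsection ([set p | E (mul p.2 p.1)] : set (BG * BG)).
  apply/funext => x /=; congr (lamS _).
  by apply/seteqP; split => y; rewrite /xsection /= inE.
exact: measurable_fun_xsection.
Qed.

Lemma null_inv (N : set BG) : measurable N -> lam N = 0 ->
  lam [set y | N (inv y)] = 0.
Proof.
move=> mN N0.
have := key measurableT mN.
rewrite null_set_integral //; last exact: measurable_funTS (phi_meas measurableT).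
move=> /esym/eqP; rewrite mule_eq0 => /orP [/eqP h|/eqP //].
by move: lamT_gt0; rewrite /lamS in h; rewrite h ltxx.
Qed.

Lemma null_rtrans (N : set BG) h : measurable N -> lam N = 0 ->
  lam [set y | N (mul y h)] = 0.
Proof.
move=> mN N0.
have mN1 : measurable ([set y | N (inv y)] : set BG).
  by apply: meas_pre1 => //; exact: (cont_inv HG).
have N10 := null_inv mN N0.
pose N2 := [set y : BG | [set y | N (inv y)] (mul (inv h) y)].
have mN2 : measurable N2.
  apply: meas_pre1 => //; apply: (cont_mul2 HG); [exact: cont_cst|exact: cont_id].
have N20 : lam N2 = 0 by rewrite /N2 lam_pre_l.
have := null_inv mN2 N20.
congr (lam _ = _); apply/seteqP; split => y;
  by rewrite /N2 /= (gVM gg) !(gVV gg).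
Qed.

Lemma negl_rtrans (N : set BG) h : lam.-negligible N ->
  lam.-negligible [set y | N (mul y h)].
Proof.
move=> [A [mA A0 NA]]; exists [set y | A (mul y h)]; split.
- apply: meas_pre1 => //; apply: (cont_mul2 HG); [exact: cont_id|exact: cont_cst].
- exact: null_rtrans.
- by move=> y /NA.
Qed.

Lemma compact_finite (K : set G) : compact K -> lam K < +oo.
Proof. by case: Hlam => _ H _; apply: H. Qed.

Lemma compact_inv (K : set G) : compact K -> compact [set y | K (inv y)].
Proof.
move=> cK.
have -> : [set y | K (inv y)] = inv @` K.
  apply/seteqP; split => [y Ky|_ [x Kx <-]]; last by rewrite /= (gVV gg).
  by exists (inv y) => //; rewrite (gVV gg).
apply: continuous_compact => //; apply: continuous_subspaceT; exact: (cont_inv HG).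
Qed.

Lemma ae_prop (K : nat -> set G) :
  (forall m, compact (K m) /\ closed (K m)) -> (forall x, exists m, K m x) ->
  forall E1 E2 : set BG, measurable E1 -> measurable E2 ->
  lam E1 < +oo -> lam E2 < +oo ->
  lam.-negligible [set x | lam E2 * lamS [set y | E1 (mul y x)] <>
                           lam E1 * lamS [set y | E2 (mul y x)]].
Proof.
move=> cK covK E1 E2 mE1 mE2 f1 f2.
pose f (x : BG) := lamS E2 * lamS [set y | E1 (mul y x)].
pose g (x : BG) := lamS E1 * lamS [set y | E2 (mul y x)].
have mf : measurable_fun setT f by apply: measurable_funeM; exact: phi_meas.
have mg : measurable_fun setT g by apply: measurable_funeM; exact: phi_meas.
have f0 x : 0 <= f x by apply: mule_ge0.
have intE (E : set BG) c (F : set BG) : measurable E -> measurable F -> 0 <= c ->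
  \int[lamS]_(x in E) (c * lamS [set y | F (mul y x)]) =
  c * (lamS F * lamS [set y | E (inv y)]).
  move=> mE mF c0; rewrite ge0_integralZl //; first by rewrite key.
  all: try exact: measurable_funTS (phi_meas mF).
  all: try by [].
have H j : lam.-negligible (~` [set x | K j x -> f x = g x]).
  have mKj : measurable (K j : set BG) by apply: closed_meas; case: (cK j).
  apply: (integral_ae_eq mKj).
  - apply/integrableP; split; first exact: measurable_funTS.
    rewrite (eq_integral f); last by move=> x _; rewrite gee0_abs.
    rewrite /f intE //.
    apply: lte_mul_pinfty => //; first by rewrite ge0_fin_numE.
    apply: lte_mul_pinfty => //; first by rewrite ge0_fin_numE.
    apply: compact_finite; apply: compact_inv; by case: (cK j).
  - exact: measurable_funTS.
  - move=> E EK mE; rewrite /f /g !intE // !muleA (muleC (lamS E2)) //.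
have [N [mN N0 NN]] := negligible_bigcup H.
exists N; split => // x nx; apply: NN.
have [j Kj] := covK x; exists j => //= h; apply: nx; exact: h Kj.
Qed.

End Haar.


Section Main.
Context (R : realType) (G : ptopologicalType) (mul : G -> G -> G) (inv : G -> G) (e : G).
Hypothesis HG : topological_group mul inv e.
Hypothesis Hsc : @second_countable G.
Context (lam : measure (Borel G) R).
Hypothesis Hlam : left_Haar_measure mul lam.
Hypothesis Hsf : sigma_finite setT lam.
Local Notation BG := (Borel G).
Context (K : nat -> set G).
Hypothesis cK : forall m, compact (K m) /\ closed (K m).
Hypothesis covK : forall x, exists m, K m x.
Context (d : measure_display) (S : measurableType d) (act : G -> S -> S).
Hypothesis Hact : measurable_action mul e act.
Hypothesis Hprop : proper_action lam act.

Let gg := tg_group HG.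

Lemma act_meas (s : S) (B : set S) : measurable B ->
  measurable ([set g | B (act g s)] : set BG).
Proof.
case: Hact => _ _ mact mB.
have mf : measurable_fun setT (fun g : BG => act g s).
  have -> : (fun g : BG => act g s) =
     (fun p : BG * S => act p.1 p.2) \o (fun g : BG => (g, s)) by [].
  apply: measurableT_comp mact _.
  exact: measurable_fun_pair.
by have := mf measurableT B mB; rewrite setTI.
Qed.

Lemma null_orbitset (s : S) (H : set G) (B : set S) : measurable B ->
  H = stabilizer act s -> closed H -> ~ compact H ->
  orbit_measure lam act s B < +oo ->
  (forall x, orbit_measure lam act (act x s) B < +oo) ->
  lam [set g | B (act g s)] = 0.
Proof.
move=> mB HH cH ncH finA finPhi.
case: Hact => act1 actM _.
pose A := [set g : G | B (act g s)].
have mA : measurable (A : set BG) by exact: act_meas.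
apply/eqP; apply: contraT => A0.
have aP : 0 < lam A by rewrite lt0e A0 measure_ge0.
have aF : lam A < +oo by exact: finA.
pose Phi x := lamS lam [set y | A (mul y x)].
have PhiE x : [set y | A (mul y x)] = (fun g => act g (act x s)) @^-1` B.
  by apply/seteqP; split => y; rewrite /A /= actM.
have PhiF x : Phi x < +oo by rewrite /Phi PhiE; exact: finPhi.
have Ainv h x : H h -> [set y | A (mul (mul y x) h)] = [set y | A (mul y x)].
  move=> Hh; rewrite HH /stabilizer /= in Hh.
  by apply/seteqP; split => y; rewrite /A /= !actM Hh.
have HV h : H h -> H (inv h).
  rewrite HH /stabilizer /= => Hh.
  by rewrite -{1}Hh -actM (gVx gg) act1.
have [m cP] : exists m, 0 < lam (A `&` K m).
  apply: contrapT => /forallNP h0.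
  have : lam A <= \sum_(n <oo) lam (A `&` K n).
    apply: measure_sigma_subadditive => //.
      move=> n; apply: measurableI => //; apply: closed_meas; by case: (cK n).
    by move=> x Ax; have [n Kn] := covK x; exists n.
  rewrite eseries0 => [|n _ _]; first by rewrite leNgt aP.
  by apply/eqP; rewrite eq_le measure_ge0 andbT leNgt; apply/negP; exact: h0.
pose C := A `&` K m.
have mC : measurable (C : set BG).
  apply: measurableI => //; apply: closed_meas; by case: (cK m).
have cF : lam C < +oo.
  by apply: le_lt_trans aF; apply: le_measure; rewrite ?inE // => x [].
have [h [Hh hdisj]] := noncompact_seq HG cH ncH (cK m).1.
have N0 := ae_prop HG Hsc Hlam Hsf cK covK mA mC aF cF.
set N := [set x | _ <> _] in N0.
pose Bad := N `|` \bigcup_i [set x | N (mul x (inv (h i)))].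
have nBad : lam.-negligible Bad.
  apply: negligibleU => //; apply: negligible_bigcup => i.
  exact: (negl_rtrans HG Hsc Hlam Hsf (inv (h i)) N0).
have [x [Px nBx]] : exists x, 0 < Phi x /\ ~ Bad x.
  apply: contrapT => /forallNP hx.
  have Phi0 : ae_eq (lamS lam) setT Phi (cst 0).
    apply: (negligibleS _ nBad) => y /= ny; apply: contrapT => By.
    apply: ny => _; apply/eqP; rewrite eq_le; apply/andP; split.
      by rewrite leNgt; apply/negP => Py; apply: (hx y).
    exact: measure_ge0.
  have := @ae_eq_integral _ _ _ (lamS lam) setT (cst 0) Phi measurableT
    (phi_meas HG Hsc Hsf mA) (measurable_cst _) Phi0.
  rewrite integral0 (key HG Hsc Hlam Hsf mA measurableT) => /eqP; rewrite mule_eq0 => /orP [/eqP a0|/eqP].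
    by move: aP; rewrite /lamS in a0; rewrite a0 ltxx.
  have -> : [set y : G | [set: BG] (inv y)] = setT by [].
  by move=> T0; move: (lamT_gt0 Hlam); rewrite /lamS in T0; rewrite T0 ltxx.

pose Di i := [set y : G | C (mul (mul y x) (inv (h i)))].
have cDi i : continuous (fun y : G => mul (mul y x) (inv (h i))).
  apply: (cont_mul2 HG); last exact: cont_cst.
  apply: (cont_mul2 HG); [exact: cont_id|exact: cont_cst].
have Dmeas i : measurable (Di i : set BG) by apply: meas_pre1 => //.
have mPx : measurable ([set y | A (mul y x)] : set BG).
  apply: meas_pre1 => //; apply: (cont_mul2 HG); [exact: cont_id|exact: cont_cst].
have eqi i : lam C * Phi x = lam A * lam (Di i).
  have : ~ N (mul x (inv (h i))) by move=> Nz; apply: nBx; right; exists i.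
  rewrite /N /= => /contrapT.
  have -> : [set y | A (mul y (mul x (inv (h i))))] = [set y | A (mul y x)].
    rewrite -(Ainv (inv (h i)) x); last exact: HV.
    by apply/seteqP; split => y; rewrite /= (gA gg).
  have -> : [set y | C (mul y (mul x (inv (h i))))] = Di i.
    by apply/seteqP; split => y; rewrite /Di /= (gA gg).
  by [].
have triv : trivIset setT Di.
  move=> i j _ _ [y [[_ Ki] [_ Kj]]].
  case: (ltngtP i j) => [ij|ij|ij]; last by [].
    by exfalso; exact: (hdisj i j (mul y x) ij Ki Kj).
  by exfalso; exact: (hdisj j i (mul y x) ij Kj Ki).
have sub k : \big[setU/set0]_(i < k) Di i `<=` [set y | A (mul y x)].
  move=> y /(@bigsetU_bigcup _ Di k y) [i _ [Ai _]].
  by rewrite -(Ainv (inv (h i)) x (HV _ (Hh i))).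
have bound k : \sum_(i < k) lam (Di i) <= Phi x.
  rewrite -measure_bigsetU //; apply: le_measure; rewrite ?inE //.
  exact: bigsetU_measurable.
have cP' : 0 < lam C by [].
have kpos : 0 < lam C * Phi x by apply: mule_gt0.
have Afin : lam A \is a fin_num by rewrite ge0_fin_numE ?measure_ge0.
have Cfin : lam C \is a fin_num by rewrite ge0_fin_numE ?measure_ge0.
have Pfin : Phi x \is a fin_num by rewrite ge0_fin_numE ?PhiF // /Phi measure_ge0.
have kfin : lam C * Phi x \is a fin_num by apply: fin_numM.
have Mfin : lam A * Phi x \is a fin_num by apply: fin_numM.
have key2 k : (k%:R * fine (lam C * Phi x))%:E <= lam A * Phi x.
  apply: (@le_trans _ _ (lam A * \sum_(i < k) lam (Di i))); last first.
    by apply: lee_wpmul2l => //; exact: measure_ge0.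
  rewrite ge0_sume_distrr; last by move=> i _; exact: measure_ge0.
  under eq_bigr do rewrite -eqi.
  have -> : \sum_(i < k) (lam C * Phi x) = (k%:R * fine (lam C * Phi x))%:E.
    rewrite -[in LHS](fineK kfin) sumEFin sumr_const card_ord.
    by rewrite mulr_natl.
  by [].
set M := fine (lam A * Phi x).
set kap := fine (lam C * Phi x).
have kap0 : (0 < kap)%R by rewrite /kap -lte_fin fineK.
have := key2 (Num.truncn (M / kap)).+1.
rewrite -(fineK Mfin) lee_fin -/M -/kap => hle.
have := truncnS_gt (M / kap); rewrite ltr_pdivrMr //.
by rewrite ltNge hle.
Qed.

End Main.


Unset Implicit Arguments.

Theorem corollary2p5 (R : realType) (G : ptopologicalType)
  (mul : G -> G -> G) (inv : G -> G) (e : G)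
  (HG : topological_group mul inv e)
  (Hlc : locally_compact [set: G])
  (Hsc : @second_countable G)
  (Hhaus : hausdorff_space G)
  (lam : measure (Borel G) R)
  (Hlam : left_Haar_measure mul lam)
  (d : measure_display) (S : measurableType d)
  (HS : borel_space R S)
  (act : G -> S -> S)
  (Hact : measurable_action mul e act)
  (Hprop : proper_action lam act)
  (Hlcl : forall s : S, locally_closed (stabilizer act s)) :
  forall s : S, compact (stabilizer act s).
Proof.
have [K [cK covK]] := sigma_compact_cover Hlc Hsc.
have Hsf : sigma_finite setT lam.
  exists K.
    apply/seteqP; split => x // _; have [m Km] := covK x; by exists m.
  move=> i; split; first by apply: closed_meas; case: (cK i).
  by apply: (compact_finite Hlam); case: (cK i).
move=> s.
have gg := tg_group HG.
have Hact' := Hact.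
case: Hact' => act1 actM mact.
pose H := stabilizer act s.
have He : H e by exact: act1.
have HM x y : H x -> H y -> H (mul x y).
  by rewrite /H /stabilizer /= => hx hy; rewrite actM hy hx.
have HV x : H x -> H (inv x).
  rewrite /H /stabilizer /= => hx.
  by rewrite -{1}hx -actM (gVx gg) act1.
have cH : closed H := lc_subgroup_closed HG He HM HV (Hlcl s).
apply: contrapT => ncH.
have Hprop' := Hprop.
case: Hprop' => B [mB _ covB finB].
have A0 n : lam [set g | B n (act g s)] = 0.
  exact: (null_orbitset HG Hsc Hlam Hsf cK covK Hact (mB n) erefl cH ncH
            (finB s n) (fun x => finB (act x s) n)).
have : lam setT <= \sum_(n <oo) lam [set g | B n (act g s)].
  apply: measure_sigma_subadditive => //.
    by move=> n; exact: (act_meas Hact s (mB n)).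
  move=> g _.
  have : (\bigcup_n B n) (act g s) by rewrite covB.
  by case=> n _ Bn; exists n.
rewrite eseries0 => [|n _ _]; last exact: A0.
by rewrite leNgt (lamT_gt0 Hlam).
Qed.
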